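(* In the single-authority allocation model described in the context, any monotone adaptive priority mechanism $A$ implements an essentially unique allocation in each state $\omega$.
   Context: An authority allocates a resource of measure $q\in(0,1)$ to agents with types $\theta=(s,m)\in\Theta=[0,1]\times\mathcal M$ (score $s(\theta)$, group $m(\theta)$, $\mathcal M$ finite). A state $\omega$ is a distribution over $\Theta$ with density; $F_\omega$ denotes the type measure and $f_\omega(s,m)$ its density. An allocation is a measurable $\mu:\Theta\to\{0,1\}$; allocations are essentially the same if they coincide up to a measure-zero set. $x_m(\mu,\omega)=\int_0^1\mu(s,m)f_\omega(s,m)ds$. An adaptive priority policy is $A=\{A_m\}_{m\in\mathcal M}$, $A_m:\mathbb R\times[0,1]\to\mathbb R$; it implements $\mu$ in state $\omega$ if (1) $\mu(\theta)=1$ iff for all $\theta'$ with $\mu(\theta')=0$, $A_{m(\theta)}(x_{m(\theta)}(\mu,\omega),s(\theta))>A_{m(\theta')}(x_{m(\theta')}(\mu,\omega),s(\theta'))$; and (2) $\sum_mx_m(\mu,\omega)=q$. $A$ is monotone if $A_m(\cdot,s)$ is decreasing for all $m,s$ and $A_m(y_m,\cdot)$ is strictly increasing for all $m,y_m$. *)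

(* Defs.v *)
From HB Require Import structures.
From mathcomp Require Import all_boot all_order all_algebra.
From mathcomp Require Import all_classical all_reals all_analysis.
Set Implicit Arguments. Unset Strict Implicit. Unset Printing Implicit Defensive.
Import Order.TTheory GRing.Theory Num.Theory.
Local Open Scope classical_set_scope.
Local Open Scope ring_scope.

Section Model.
Variables (R : realType) (M : finType).

(* Types theta = (s, m) with s in [0,1]. Functions are written in curried
   form  m -> s -> ... ; only their values on s in [0,1] matter. *)
Definition scores : set R := `[0, 1].

(* A state omega, given by its density f m s = f_omega(s, m). *)
Definition is_state (f : M -> R -> R) : Prop :=
  [/\ (forall m s, 0 <= f m s),
      (forall m, measurable_fun scores (f m)),
      (forall m, (@lebesgue_measure R).-integrable scores (fun s => (f m s)%:E)) &
      \sum_(m : M) Rintegral (@lebesgue_measure R) scores (f m) = 1].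

Definition is_allocation (mu : M -> R -> bool) : Prop :=
  forall m, measurable_fun scores (fun s => ((mu m s)%:R : R)).

Definition xm (mu : M -> R -> bool) (f : M -> R -> R) (m : M) : R :=
  Rintegral (@lebesgue_measure R) scores (fun s => (mu m s)%:R * f m s).

Definition policy := M -> R -> R -> R.

Definition implements (A : policy) (q : R) (mu : M -> R -> bool)
    (f : M -> R -> R) : Prop :=
  (forall m s, s \in scores ->
     (mu m s <->
      (forall m' s', s' \in scores -> ~~ mu m' s' ->
         A m' (xm mu f m') s' < A m (xm mu f m) s)))
  /\ \sum_(m : M) xm mu f m = q.

Definition monotone_policy (A : policy) : Prop :=
  (forall m s y y', s \in scores -> y <= y' -> A m y' s <= A m y s) /\
  (forall m y s s', s \in scores -> s' \in scores -> s < s' -> A m y s < A m y s').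

(* Essentially the same: they differ on an F_omega-null set of types. *)
Definition ess_same (f : M -> R -> R) (mu mu' : M -> R -> bool) : Prop :=
  forall m, (\int[@lebesgue_measure R]_(s in scores)
               (((mu m s != mu' m s)%:R * f m s)%:E) = 0)%E.

End Model.

(* Main.v *)
Require Import Defs.
From HB Require Import structures.
From mathcomp Require Import all_boot all_order all_algebra.
From mathcomp Require Import all_classical all_reals all_analysis.
From mathcomp Require Import measurable_realfun.
Import Order.TTheory GRing.Theory Num.Theory.
Local Open Scope ring_scope.

Section H.
Variables (R : realType) (M : finType).

Lemma mscores : measurable (@scores R).
Proof. exact: measurable_itv. Qed.

Lemma int_bf (b : R -> bool) (g : R -> R) :
  measurable_fun (@scores R) (fun s => ((b s)%:R : R)) ->
  measurable_fun (@scores R) g ->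
  (@lebesgue_measure R).-integrable (@scores R) (fun s => (g s)%:E) ->
  (@lebesgue_measure R).-integrable (@scores R) (EFin \o (fun s => (b s)%:R * g s)).
Proof.
move=> mb mg ig; apply: le_integrable; [exact: measurable_itv| | |exact: ig].
  apply/measurable_EFinP. exact: measurable_funM.
move=> s _ /=; rewrite lee_fin normrM.
by case: (b s); rewrite /= ?normr1 ?mul1r ?normr0 ?mul0r.
Qed.

Lemma sum_le_eq (a b : M -> R) : \sum_m a m = \sum_m b m ->
  (forall m, a m <= b m) -> forall m, a m = b m.
Proof.
move=> hs hle m; apply/eqP; rewrite eq_sym -subr_eq0; apply/eqP.
apply: (@psumr_eq0P _ _ predT (fun m => b m - a m)) => //.
  by move=> i _; rewrite subr_ge0.
by rewrite sumrB hs subrr.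
Qed.

Lemma xm_le (mu mu' : M -> R -> bool) (f : M -> R -> R) m :
  is_state f -> is_allocation mu -> is_allocation mu' ->
  (forall s, s \in (@scores R) -> mu m s -> mu' m s) -> xm mu f m <= xm mu' f m.
Proof.
move=> [f0 fm fi _] amu amu' h; apply: le_Rintegral.
- exact: measurable_itv.
- exact: int_bf.
- exact: int_bf.
move=> s hs; have := h s (mem_set hs).
case: (mu m s); case: (mu' m s) => /= H; rewrite ?mul0r ?mul1r ?f0 //; by move: (H isT).
Qed.

Lemma ess_from_le (mu mu' : M -> R -> bool) (f : M -> R -> R) :
  is_state f -> is_allocation mu -> is_allocation mu' ->
  \sum_m xm mu f m = \sum_m xm mu' f m ->
  (forall m s, s \in (@scores R) -> mu m s -> mu' m s) -> ess_same f mu mu'.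
Proof.
move=> sf amu amu' hs hle.
have hx : forall m, xm mu f m = xm mu' f m.
  by apply: sum_le_eq hs _ => m; apply: xm_le => //; exact: hle.
move=> m; case: sf => [f0 fm fi _].
have i1 := int_bf _ _ (amu m) (fm m) (fi m).
have i2 := int_bf _ _ (amu' m) (fm m) (fi m).
transitivity ((xm mu' f m)%:E - (xm mu f m)%:E)%E; last by rewrite hx subee.
rewrite /xm /Rintegral.
rewrite fineK; last by apply: integrable_fin_num => //; exact: measurable_itv.
rewrite fineK; last by apply: integrable_fin_num => //; exact: measurable_itv.
rewrite -integralB_EFin //; last exact: measurable_itv.
apply: eq_integral => s /[1!inE] hs0 /=; rewrite -EFinB; congr EFin.
have := hle m s (mem_set hs0).
case: (mu m s); case: (mu' m s) => /= H; rewrite ?mul0r ?mul1r ?subrr ?subr0 //; by move: (H isT).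
Qed.
End H.

Theorem proposition2 (R : realType) (M : finType) (q : R)
    (hq : 0 < q < 1) (f : M -> R -> R) (A : policy R M) :
  is_state f -> monotone_policy A ->
  forall mu mu' : M -> R -> bool,
    is_allocation mu -> is_allocation mu' ->
    implements A q mu f -> implements A q mu' f ->
    ess_same f mu mu'.
Proof.
move=> sf [Amon _] mu mu' amu amu' [Hi Hs] [Hi' Hs'].
have hs : \sum_m xm mu f m = \sum_m xm mu' f m by rewrite Hs Hs'.
have E1 : (forall m, xm mu' f m <= xm mu f m) -> forall m, xm mu f m = xm mu' f m.
  by move=> h m; apply/esym; apply: sum_le_eq h m; rewrite hs.
have E2 : (forall m, xm mu f m <= xm mu' f m) -> forall m, xm mu f m = xm mu' f m.
  by move=> h m; apply: sum_le_eq h m.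
have hx : forall m, xm mu f m = xm mu' f m.
  case: (boolP [exists m, xm mu f m < xm mu' f m]) => [/existsP [m hm]|/existsPn hn];
    last by apply: E1 => m; rewrite leNgt; apply: hn.
  case: (boolP [exists k, xm mu' f k < xm mu f k]) => [/existsP [k hk]|/existsPn hn];
    last by move=> m'; apply: E2 => k; rewrite leNgt; apply: hn.
  exfalso.
  have [s [hs1 hs2 hs3]] : exists s, [/\ s \in (@scores R), mu' m s & ~~ mu m s].
    apply: contrapT => H; move: hm; rewrite ltNge => /negP; apply.
    apply: xm_le => // s hs1 h1; apply: contrapT => h2; apply: H; exists s; split => //.
    exact/negP.
  have [t [ht1 ht2 ht3]] : exists t, [/\ t \in (@scores R), mu k t & ~~ mu' k t].
    apply: contrapT => H; move: hk; rewrite ltNge => /negP; apply.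
    apply: xm_le => // t ht1 h1; apply: contrapT => h2; apply: H; exists t; split => //.
    exact/negP.
  have c1 := (Hi k t ht1).1 ht2 m s hs1 hs3.
  have c2 := (Hi' m s hs1).1 hs2 k t ht1 ht3.
  have c3 := Amon m s _ _ hs1 (ltW hm).
  have c4 := Amon k t _ _ ht1 (ltW hk).
  have := lt_le_trans c1 c4.
  have := lt_le_trans c2 c3.
  move=> h1 h2; have := lt_trans h1 h2; by rewrite ltxx.
have [hle|hle] : (forall m s, s \in (@scores R) -> mu m s -> mu' m s) \/
                 (forall m s, s \in (@scores R) -> mu' m s -> mu m s).
  case: (pselect (forall m s, s \in (@scores R) -> mu m s -> mu' m s)) => h; [by left|right].
  move=> k t ht1 ht2; apply: contrapT => ht3.
  have [m [s [hs1 hs2 hs3]]] : exists m s, [/\ s \in (@scores R), mu m s & ~~ mu' m s].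
    apply: contrapT => H; apply: h => m s hs1 h1; apply: contrapT => h2.
    by apply: H; exists m, s; split => //; exact/negP.
  have c1 := (Hi m s hs1).1 hs2 k t ht1 (introN idP ht3).
  have c2 := (Hi' k t ht1).1 ht2 m s hs1 hs3.
  rewrite !hx in c1.
  by have := lt_trans c1 c2; rewrite ltxx.
  exact: ess_from_le.
have : ess_same f mu' mu by apply: ess_from_le.
by move=> h m; rewrite -(h m); apply: eq_integral => s _; rewrite eq_sym.
Qed.
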